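(* Let $(X,d)$ be an ultrametric space and $f:X\to X$ continuous. If any one of the following holds, then $f$ has the finite shadowing property: (i) $f$ is eventually $1$-Lipschitz; (ii) $f$ is invertible and $f^{-1}$ is eventually $1$-Lipschitz; (iii) $f$ is an invertible eventual similarity and $f^{-1}$ is uniformly continuous.
   Context: An ultrametric space satisfies $d(x,z)\le\max\{d(x,y),d(y,z)\}$. A map $g$ is eventually $1$-Lipschitz if there is $\varepsilon>0$ with $d(g(x),g(y))\le d(x,y)$ whenever $d(x,y)<\varepsilon$. $f$ is an eventual similarity if there are $\varepsilon>0$, $s>0$ with $d(f(x),f(y))=s\,d(x,y)$ whenever $d(x,y)<\varepsilon$. Finite shadowing property: for every $\varepsilon>0$ there is $\delta>0$ such that every finite sequence $(x_i)_{i=0}^k$ with $d(f(x_i),x_{i+1})<\delta$ for $0\le i<k$ admits $z$ with $d(f^i(z),x_i)<\varepsilon$ for $0\le i\le k$. *)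

(* Defs.v *)
From Stdlib Require Import Reals.
Open Scope R_scope.

Definition is_metric {X : Type} (d : X -> X -> R) : Prop :=
  (forall x y, 0 <= d x y) /\
  (forall x y, d x y = 0 <-> x = y) /\
  (forall x y, d x y = d y x) /\
  (forall x y z, d x z <= d x y + d y z).

Definition is_ultrametric {X : Type} (d : X -> X -> R) : Prop :=
  is_metric d /\ (forall x y z, d x z <= Rmax (d x y) (d y z)).

Definition continuous_on {X : Type} (d : X -> X -> R) (f : X -> X) : Prop :=
  forall x eps, 0 < eps -> exists delta, 0 < delta /\
    forall y, d x y < delta -> d (f x) (f y) < eps.

Definition uniformly_continuous {X : Type} (d : X -> X -> R) (f : X -> X) : Prop :=
  forall eps, 0 < eps -> exists delta, 0 < delta /\
    forall x y, d x y < delta -> d (f x) (f y) < eps.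

Definition eventually_1_Lipschitz {X : Type} (d : X -> X -> R) (g : X -> X) : Prop :=
  exists eps, 0 < eps /\ forall x y, d x y < eps -> d (g x) (g y) <= d x y.

Definition eventual_similarity {X : Type} (d : X -> X -> R) (f : X -> X) : Prop :=
  exists eps s, 0 < eps /\ 0 < s /\
    forall x y, d x y < eps -> d (f x) (f y) = s * d x y.

Definition inverse_of {X : Type} (f g : X -> X) : Prop :=
  (forall x, g (f x) = x) /\ (forall x, f (g x) = x).

Fixpoint iter {X : Type} (n : nat) (f : X -> X) (x : X) : X :=
  match n with O => x | S n' => f (iter n' f x) end.

Definition finite_shadowing {X : Type} (d : X -> X -> R) (f : X -> X) : Prop :=
  forall eps, 0 < eps -> exists delta, 0 < delta /\
    forall (k : nat) (xs : nat -> X),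
      (forall i, (i < k)%nat -> d (f (xs i)) (xs (S i)) < delta) ->
      exists z, forall i, (i <= k)%nat -> d (iter i f z) (xs i) < eps.

(* Main.v *)
Require Import Defs.
From Stdlib Require Import Reals Lra Lia.
Open Scope R_scope.

Lemma iter_S_r {X : Type} (f : X -> X) n x : iter (S n) f x = iter n f (f x).
Proof. induction n; simpl in *; [reflexivity| now rewrite <- IHn]. Qed.

Lemma iter_fg {X : Type} (f g : X -> X) : inverse_of f g ->
  forall i m x, iter i f (iter (i + m) g x) = iter m g x.
Proof.
  intros [H1 H2] i m x. induction i. reflexivity.
  rewrite iter_S_r. replace (S i + m)%nat with (S (i + m)) by lia. simpl.
  rewrite H2. exact IHi.
Qed.

Lemma case_i (X : Type) (d : X -> X -> R) (f : X -> X) :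
  is_ultrametric d -> eventually_1_Lipschitz d f -> finite_shadowing d f.
Proof.
  intros [[H0 [Hid _]] Hu] [e0 [He0 HL]] eps Heps.
  exists (Rmin eps e0). split. apply Rmin_pos; lra.
  intros k xs Hxs. exists (xs O).
  assert (forall i, (i <= k)%nat -> d (iter i f (xs O)) (xs i) < Rmin eps e0).
  { induction i; intros Hi.
    - simpl. replace (d (xs O) (xs O)) with 0 by (symmetry; apply Hid; auto).
      apply Rmin_pos; lra.
    - simpl. eapply Rle_lt_trans. apply (Hu _ (f (xs i))).
      apply Rmax_lub_lt.
      + eapply Rle_lt_trans. apply HL. eapply Rlt_le_trans. apply IHi. lia.
        apply Rmin_r. apply IHi. lia.
      + apply Hxs. lia. }
  intros i Hi. eapply Rlt_le_trans. apply H; auto. apply Rmin_l.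
Qed.

Lemma case_ii (X : Type) (d : X -> X -> R) (f g : X -> X) :
  is_ultrametric d -> inverse_of f g -> eventually_1_Lipschitz d g -> finite_shadowing d f.
Proof.
  intros [[H0 [Hid [Hsym _]]] Hu] Hinv [e0 [He0 HL]] eps Heps.
  exists (Rmin eps e0). split. apply Rmin_pos; lra.
  intros k xs Hxs. exists (iter k g (xs k)).
  assert (forall j, (j <= k)%nat -> d (iter j g (xs k)) (xs (k - j)%nat) < Rmin eps e0).
  { induction j; intros Hj.
    - simpl. replace (k - 0)%nat with k by lia.
      replace (d (xs k) (xs k)) with 0 by (symmetry; apply Hid; auto).
      apply Rmin_pos; lra.
    - simpl. pose proof (Hxs (k - S j)%nat ltac:(lia)) as Hx.
      replace (S (k - S j)) with (k - j)%nat in Hx by lia.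
      assert (Hm : d (iter j g (xs k)) (f (xs (k - S j)%nat)) < Rmin eps e0).
      { eapply Rle_lt_trans. apply (Hu _ (xs (k - j)%nat)).
        apply Rmax_lub_lt. apply IHj; lia. rewrite Hsym; exact Hx. }
      destruct Hinv as [Hgf _].
      rewrite <- (Hgf (xs (k - S j)%nat)).
      eapply Rle_lt_trans. apply HL. eapply Rlt_le_trans. apply Hm. apply Rmin_r.
      exact Hm. }
  intros i Hi. replace k with (i + (k - i))%nat at 1 by lia.
  rewrite (iter_fg f g Hinv).
  replace i with (k - (k - i))%nat at 2 by lia.
  eapply Rlt_le_trans. apply H; lia. apply Rmin_l.
Qed.

Theorem theorem5p2 (X : Type) (d : X -> X -> R) (f : X -> X) :
  is_ultrametric d ->
  continuous_on d f ->
  (eventually_1_Lipschitz d f \/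
   (exists g, inverse_of f g /\ eventually_1_Lipschitz d g) \/
   (exists g, inverse_of f g /\ eventual_similarity d f /\ uniformly_continuous d g)) ->
  finite_shadowing d f.
Proof.
  intros Hum _ [H | [[g [Hi H]] | [g [Hi [[e0 [s [He0 [Hs Hsim]]]] Huc]]]]].
  - now apply case_i.
  - now apply (case_ii X d f g).
  - destruct (Rle_dec s 1) as [Hs1 | Hs1].
    + apply case_i; auto. exists e0. split; auto. intros x y Hxy.
      rewrite Hsim by auto. destruct Hum as [[H0 _] _]. specialize (H0 x y). nra.
    + apply (case_ii X d f g); auto.
      destruct (Huc e0 He0) as [dl [Hdl Hg]].
      exists dl. split; auto. intros x y Hxy.
      pose proof (Hg x y Hxy) as Hgxy. pose proof (Hsim _ _ Hgxy) as E.
      destruct Hi as [_ Hfg]. rewrite !Hfg in E.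
      destruct Hum as [[H0 _] _]. specialize (H0 (g x) (g y)). nra.
Qed.
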